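(* Let $P\in\Omega[y_0,\ldots,y_n]$ be non-zero and let $r(x)=c_0x^{\nu_0}+\cdots+c_kx^{\nu_k}$ be a generalized polynomial ($c_i\ne0$, $\nu_0<\cdots<\nu_k$). Put $P_0=P$, $P_{i+1}=P_i[c_ix^{\nu_i}]$ for $i=0,\ldots,k$, and $Q=P[r(x)]=P_{k+1}$. Then $r(x)$ is admissible for $P$ if and only if the lowest point of $E_{\nu_k}(Q)$ has height (ordinate) greater than or equal to $1$.
   Context: $\Omega$: field of generalized power series $\sum_{i\ge1}c_ix^{\mu_i}$, $c_i\in\mathbb{C}$, $\mu_i\in\mathbb{R}$ strictly increasing, $\mu_i\to\infty$ if infinitely many terms. The operator $'$ is one fixed choice among: (a) $\frac{d}{dx}$ (set $\varepsilon=1$, $[\mu]=\mu$, $T^{\langle e_\kappa\rangle}=T(T-1)\cdots(T-\kappa+1)$); (b) $x\frac{d}{dx}$ ($\varepsilon=0$, $[\mu]=\mu$, $T^{\langle e_\kappa\rangle}=T^\kappa$); (c) $s'(x)=s(qx)$, $\sum c_ix^{\mu_i}\mapsto\sum c_iq^{\mu_i}x^{\mu_i}$, fixed $q\in\mathbb{C}$, $|q|\ne1$ ($\varepsilon=0$, $[\mu]=q^\mu$, $T^{\langle e_\kappa\rangle}=T^\kappa$). For $\rho\in\mathbb{Z}_{\ge0}^{n+1}$: $|\rho|=\sum\rho_\kappa$, $\omega(\rho)=\sum\kappa\rho_\kappa$, $T^{\langle\rho\rangle}=\prod_\kappa (T^{\langle e_\kappa\rangle})^{\rho_\kappa}$,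 $y^\rho=\prod y_\kappa^{\rho_\kappa}$. Full substitution: $P[s]=P(s+y_0,s'+y_1,\ldots,s^{(n)}+y_n)$. Write uniquely $P=\sum_\rho\sum_\alpha P_{(\alpha,\rho)}x^{\alpha+\varepsilon\omega(\rho)}y^\rho$ with $P_{(\alpha,\rho)}\in\mathbb{C}$. Cloud: $\mathcal{C}(P)=\{(\alpha,h): P_{(\alpha,\rho)}\ne0$ for some $|\rho|=h\}$. Newton polygon $\mathcal{N}(P)$: convex hull of $\bigcup_{V\in\mathcal{C}(P)}(V+\mathbb{R}_{\ge0}\times\{0\})$. For $\mu\in\mathbb{R}$, $L_\mu(P)$ is the line $\{\mu h+\alpha=\alpha_0\}$ with $\alpha_0$ minimal such that it meets $\mathcal{N}(P)$, and $E_\mu(P)=L_\mu(P)\cap\mathcal{N}(P)$ (a vertex or a side). Characteristic polynomial: $\Phi_{(P;\mu)}(C)=\sum_{(\alpha,|\rho|)\in E_\mu(P)}P_{(\alpha,\rho)}\,T^{\langle\rho\rangle}|_{T=[\mu]}\,C^{|\rho|}$. $r$ is admissible for $P$ if $\Phi_{(P_i;\nu_i)}(c_i)=0$ for $i=0,\ldots,k$. *)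

(* Defs.v *)
From HB Require Import structures.
From mathcomp Require Import all_boot all_order all_algebra.
From mathcomp Require Import all_classical all_reals all_analysis.
From mathcomp Require Export complex.
Set Implicit Arguments. Unset Strict Implicit. Unset Printing Implicit Defensive.
Import Order.TTheory GRing.Theory Num.Theory.
Local Open Scope ring_scope.
Local Open Scope classical_set_scope.

Section GPS.
Variable R : realType.
Local Notation C := R[i].
Local Notation "x %:C" := (real_complex R x) (at level 1, format "x %:C").

Definition cexp (z : C) : C :=
  let: Complex a b := z in Complex (expR a * cos b) (expR a * sin b).

(* Generalized power series: a series sum_i c_i x^{mu_i} is encoded by
   its coefficient function f : R -> C (f mu = coefficient of x^mu).
   Membership in Omega: the support is finite below every bound, i.e.
   it is finite or a strictly increasing sequence tending to +oo.    *)
Definition ser := R -> C.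

Definition is_gps (f : ser) : Prop :=
  forall M : R, finite_set [set a | f a != 0 /\ a <= M].

Definition mono (c : C) (nu : R) : ser := fun a => if a == nu then c else 0.
Definition sone : ser := mono 1 0.
Definition sadd (f g : ser) : ser := fun a => f a + g a.
Definition smul (f g : ser) : ser :=
  fun g0 => \sum_(a \in [set a | f a != 0 /\ g (g0 - a) != 0]) f a * g (g0 - a).
Definition spow (f : ser) (m : nat) : ser := iter m (smul f) sone.

(* The three operators '.  For (c) q is given as q = cexp lam, and
   q^mu := cexp (mu * lam) (a fixed determination of the power).     *)
Inductive opkind :=
| OpDeriv
| OpEuler
| OpQ of C.             (* (c)  s(x) |-> s(q x), q = cexp lam *)

Definition op_ok (o : opkind) : Prop :=
  match o with OpQ lam => `|cexp lam| != 1 | _ => True end.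

Definition eps (o : opkind) : R := match o with OpDeriv => 1 | _ => 0 end.

Definition brk (o : opkind) (mu : R) : C :=
  match o with OpQ lam => cexp (mu%:C * lam) | _ => mu%:C end.

Definition sop (o : opkind) (f : ser) : ser :=
  match o with
  | OpDeriv => fun a => (a + 1)%:C * f (a + 1)
  | OpEuler => fun a => a%:C * f a
  | OpQ lam => fun a => cexp (a%:C * lam) * f a
  end.

Definition Te (o : opkind) (kappa : nat) (t : C) : C :=
  match o with
  | OpDeriv => \prod_(j < kappa) (t - j%:R)
  | _ => t ^+ kappa
  end.

(* Differential polynomials P in Omega[y_0,...,y_n]:
   P rho = the coefficient (in Omega) of y^rho, rho in N^{n+1}.      *)
Variable n : nat.
Definition mexp := {ffun 'I_n.+1 -> nat}.
Definition dpoly := mexp -> ser.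

Definition msize (rho : mexp) : nat := (\sum_(k < n.+1) rho k)%N.
Definition mweight (rho : mexp) : nat := (\sum_(k < n.+1) k * rho k)%N.
Definition mzero : mexp := [ffun _ => 0%N].
Definition munit (k : 'I_n.+1) : mexp := [ffun j => nat_of_bool (j == k)].

Definition dsupp (P : dpoly) : set mexp := [set rho | exists a, P rho a != 0].

Definition is_dpoly (P : dpoly) : Prop :=
  finite_set (dsupp P) /\ forall rho, is_gps (P rho).

Definition dpoly_nonzero (P : dpoly) : Prop := exists rho a, P rho a != 0.

Definition pone : dpoly := fun rho => if rho == mzero then sone else (fun _ => 0).
Definition pmul (A B : dpoly) : dpoly := fun rho g0 =>
  \sum_(r1 \in [set r1 : mexp | forall j, (r1 j <= rho j)%N])
     smul (A r1) (B [ffun j => (rho j - r1 j)%N]) g0.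
Definition ppow (A : dpoly) (m : nat) : dpoly := iter m (pmul A) pone.
Definition pscale (f : ser) (A : dpoly) : dpoly := fun rho => smul f (A rho).

Definition pshift (o : opkind) (s : ser) (k : 'I_n.+1) : dpoly :=
  fun rho => if rho == mzero then iter k (sop o) s
             else if rho == munit k then sone else (fun _ => 0).

(* full substitution P[s] = P(s + y_0, s' + y_1, ..., s^(n) + y_n) *)
Definition subst (o : opkind) (P : dpoly) (s : ser) : dpoly := fun rho g0 =>
  \sum_(sg \in dsupp P)
     pscale (P sg) (\big[pmul/pone]_(k < n.+1) ppow (pshift o s k) (sg k)) rho g0.

(* P = sum_rho sum_alpha P_(alpha,rho) x^(alpha + eps*omega(rho)) y^rho *)
Definition pcoef (o : opkind) (P : dpoly) (alpha : R) (rho : mexp) : C :=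
  P rho (alpha + eps o * (mweight rho)%:R).

Definition cloud (o : opkind) (P : dpoly) : set (R * R) :=
  [set p | exists rho, pcoef o P p.1 rho != 0 /\ p.2 = (msize rho)%:R].

Definition convex2 (A : set (R * R)) : Prop :=
  forall p q (t : R), 0 <= t <= 1 -> A p -> A q ->
    A (t * p.1 + (1 - t) * q.1, t * p.2 + (1 - t) * q.2).

Definition hull2 (S : set (R * R)) : set (R * R) :=
  [set p | forall A, convex2 A -> S `<=` A -> A p].

Definition newton (o : opkind) (P : dpoly) : set (R * R) :=
  hull2 [set p | exists v, cloud o P v /\ v.1 <= p.1 /\ p.2 = v.2].

Definition Eface (o : opkind) (P : dpoly) (mu : R) : set (R * R) :=
  [set p | newton o P p /\
     forall q, newton o P q -> mu * p.2 + p.1 <= mu * q.2 + q.1].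

Definition charpoly (o : opkind) (P : dpoly) (mu : R) : {poly C} :=
  \sum_(ar \in [set ar : R * mexp | pcoef o P ar.1 ar.2 != 0 /\
                                    Eface o P mu (ar.1, (msize ar.2)%:R)])
     (pcoef o P ar.1 ar.2 *
      \prod_(k < n.+1) Te o k (brk o mu) ^+ (ar.2 k)) *: 'X^(msize ar.2).

Fixpoint Pseq (o : opkind) (P : dpoly) (c : nat -> C) (nu : nat -> R) (i : nat)
  : dpoly :=
  match i with
  | 0 => P
  | i'.+1 => subst o (Pseq o P c nu i') (mono (c i') (nu i'))
  end.

Definition admissible (o : opkind) (P : dpoly) (k : nat) (c : nat -> C)
  (nu : nat -> R) : Prop :=
  forall i, (i <= k)%N -> root (charpoly o (Pseq o P c nu i) (nu i)) (c i).

Definition lowest_point_ge1 (o : opkind) (Q : dpoly) (mu : R) : Prop :=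
  exists p, Eface o Q mu p /\ (forall q, Eface o Q mu q -> p.2 <= q.2) /\ 1 <= p.2.

End GPS.

(* Main.v *)
Require Import Defs.
From HB Require Import structures.
From mathcomp Require Import all_boot all_order all_algebra.
From mathcomp Require Import all_classical all_reals all_analysis.
From mathcomp Require Import complex.
From mathcomp Require Import ring lra zify.
Import Order.TTheory GRing.Theory Num.Theory.
Local Open Scope ring_scope.
Local Open Scope classical_set_scope.

Lemma fsum_single (K : ringType) (T : choiceType) (A : set T) (F : T -> K) (x0 : T) :
  (forall x, A x -> x <> x0 -> F x = 0) -> (~ A x0 -> F x0 = 0) ->
  \sum_(x \in A) F x = F x0.
Proof.
move=> H1 H2.
rewrite (fsbig_widen A (A `|` [set x0]) F); last 2 first.
- by move=> x Ax; left.
- move=> x [[Ax|ex] nA]; first by case: (nA Ax).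
  by rewrite /= ex; apply: H2; rewrite -ex.
have -> : \sum_(x \in A `|` [set x0]) F x = \sum_(x \in [set x0]) F x.
  symmetry; apply: fsbig_widen.
  - by move=> x ->; right.
  - move=> x [[Ax|ex] nx]; last by case: nx.
    by apply: H1 => // ex; apply: nx.
by rewrite fsbig_set1.
Qed.

Lemma mono_app (R : realType) (c : R[i]) (nu a : R) :
  mono c nu a = if a == nu then c else 0.
Proof. by []. Qed.

Lemma smul_mono_r (R : realType) (f : ser R) (x : R[i]) (e g0 : R) :
  smul f (mono x e) g0 = f (g0 - e) * x.
Proof.
rewrite /smul (@fsum_single _ _ _ _ (g0 - e)).
- by rewrite mono_app subKr eqxx.
- move=> a /= [fa ma] ne; exfalso; apply: ne.
  move: ma; rewrite mono_app; have [<- _|_] := eqVneq (g0 - a) e.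
    by rewrite subKr.
  by rewrite eqxx.
- move=> /= nA.
  rewrite mono_app subKr eqxx.
  have [->|f0] := eqVneq (f (g0 - e)) 0; first by rewrite mul0r.
  have [->|x0] := eqVneq x 0; first by rewrite mulr0.
  exfalso; apply: nA; split => //.
  by rewrite mono_app subKr eqxx.
Qed.

Lemma smul_mono_mono (R : realType) (x y : R[i]) (e1 e2 g0 : R) :
  smul (mono x e1) (mono y e2) g0 = mono (x * y) (e1 + e2) g0.
Proof.
rewrite smul_mono_r !mono_app.
have -> : (g0 - e2 == e1) = (g0 == e1 + e2).
  by apply/eqP/eqP => [<-|->]; [rewrite subrK | rewrite addrK].
by case: ifP; rewrite ?mul0r.
Qed.

Lemma mono0 (R : realType) (e : R) : mono (0 : R[i]) e = (fun _ => 0).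
Proof. by apply: funext => a; rewrite mono_app; case: ifP. Qed.

Notation mz n := (Defs.mzero n).

Definition mle {n} (a b : mexp n) := forall j, (a j <= b j)%N.
Definition madd {n} (a b : mexp n) : mexp n := [ffun j => (a j + b j)%N].
Definition msub {n} (a b : mexp n) : mexp n := [ffun j => (a j - b j)%N].
Definition Ew {R : realType} {n} (o : opkind R) (nu : R) (rho : mexp n) : R :=
  nu * (msize rho)%:R - eps o * (mweight rho)%:R.

Lemma msize_add n (a b : mexp n) : msize (madd a b) = (msize a + msize b)%N.
Proof. by rewrite /msize -big_split; apply: eq_bigr => j _; rewrite ffunE. Qed.

Lemma mweight_add n (a b : mexp n) : mweight (madd a b) = (mweight a + mweight b)%N.
Proof. by rewrite /mweight -big_split; apply: eq_bigr => j _; rewrite ffunE mulnDr. Qed.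

Lemma Ew_add (R : realType) n o nu (a b : mexp n) :
  Ew o nu (madd a b) = Ew (R:=R) o nu a + Ew o nu b.
Proof. rewrite /Ew msize_add mweight_add !natrD; ring. Qed.

Lemma madd_msub n (r rho : mexp n) : mle r rho -> madd r (msub rho r) = rho.
Proof. by move=> H; apply/ffunP => j; rewrite !ffunE subnKC. Qed.

Lemma msize0 n : msize (mz n) = 0%N.
Proof. by rewrite /msize big1 // => j _; rewrite ffunE. Qed.

Lemma mweight0 n : mweight (mz n) = 0%N.
Proof. by rewrite /mweight big1 // => j _; rewrite ffunE muln0. Qed.

Lemma Ew0 (R : realType) n o nu : Ew (R:=R) o nu (mz n) = 0.
Proof. by rewrite /Ew msize0 mweight0 !mulr0 subrr. Qed.

Lemma msize_unit n (k : 'I_n.+1) : msize (munit k) = 1%N.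
Proof.
rewrite /msize (bigD1 k) //= ffunE eqxx big1 // => j /negbTE jk.
by rewrite ffunE jk.
Qed.

Lemma mweight_unit n (k : 'I_n.+1) : mweight (munit k) = k.
Proof.
rewrite /mweight (bigD1 k) //= ffunE eqxx muln1 big1 ?addn0 // => j /negbTE jk.
by rewrite ffunE jk muln0.
Qed.

Lemma Ew_unit (R : realType) n o nu (k : 'I_n.+1) :
  Ew (R:=R) o nu (munit k) = nu - eps o * (k : nat)%:R.
Proof. by rewrite /Ew msize_unit mweight_unit mulr1. Qed.

Lemma munit_neq0 n (k : 'I_n.+1) : munit k != mz n.
Proof. by apply/eqP => /ffunP /(_ k); rewrite !ffunE eqxx. Qed.

Lemma msize_eq0 n (a : mexp n) : msize a = 0%N -> a = mz n.
Proof.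
move=> /eqP; rewrite /msize sum_nat_eq0 => /forallP H.
by apply/ffunP => j; rewrite ffunE; apply/eqP; apply: (implyP (H j)).
Qed.

Lemma mle_lt n (a b : mexp n) : mle a b -> a != b -> (msize a < msize b)%N.
Proof.
move=> le neq.
have [j hj] : exists j, (a j < b j)%N.
  apply/existsP; apply: contraR neq => /existsPn H.
  apply/eqP/ffunP => j; apply/eqP; rewrite eqn_leq le /=.
  by rewrite leqNgt H.
rewrite -(@madd_msub _ a b le) msize_add -{1}[msize a]addn0 ltn_add2l.
rewrite /msize (bigD1 j) //= ffunE.
have : (0 < b j - a j)%N by rewrite subn_gt0.
lia.
Qed.

Lemma fsum_neq0 (K : ringType) (T : choiceType) (A : set T) (F : T -> K) :
  \sum_(x \in A) F x != 0 -> exists2 x, A x & F x != 0.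
Proof.
move=> H; apply: contrapT => H'; move: H; rewrite fsbig1 ?eqxx // => x Ax.
by apply/eqP; apply: contraT => Fx; exfalso; apply: H'; exists x.
Qed.

Definition MF {R : realType} {n} (o : opkind R) (nu : R) (A : dpoly R n)
  (a : mexp n -> R[i]) (s : mexp n) (v : R[i]) :=
  [/\ forall rho, A rho = mono (a rho) (Ew o nu s - Ew o nu rho),
      forall rho, a rho != 0 -> mle rho s,
      a s = 1 & a (mz n) = v].

Definition mconv {R : realType} {n} (a b : mexp n -> R[i]) (rho : mexp n) : R[i] :=
  \sum_(r1 \in [set r1 : mexp n | mle r1 rho]) a r1 * b (msub rho r1).

Lemma pmul_MF (R : realType) n o nu (A B : dpoly R n) a b sa sb va vb :
  MF o nu A a sa va -> MF o nu B b sb vb ->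
  MF o nu (pmul A B) (mconv a b) (madd sa sb) (va * vb).
Proof.
move=> [HA Ha Hsa Hva] [HB Hb Hsb Hvb]; split.
- move=> rho; apply: funext => g0.
  rewrite /pmul.
  set X := Ew o nu (madd sa sb) - Ew o nu rho.
  have -> : \sum_(r1 \in [set r1 : mexp n | forall j, (r1 j <= rho j)%N])
      smul (A r1) (B [ffun j => (rho j - r1 j)%N]) g0 =
      \sum_(r1 \in [set r1 : mexp n | mle r1 rho])
      (if g0 == X then a r1 * b (msub rho r1) else 0).
    apply: eq_fsbigr => r1; rewrite inE /= => le.
    rewrite HA HB smul_mono_mono mono_app.
    suff -> : Ew o nu sa - Ew o nu r1 + (Ew o nu sb - Ew o nu [ffun j => (rho j - r1 j)%N]) = X by [].
    rewrite /X Ew_add -{2}(@madd_msub _ _ _ le) Ew_add /msub; ring.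
  rewrite mono_app; case: ifP => _.
    by apply: eq_fsbigr.
  by rewrite fsbig1.
- move=> rho /fsum_neq0 [r1 /= le]; rewrite mulf_eq0 negb_or => /andP[/Ha h1 /Hb h2] j.
  move: (h1 j) (h2 j) (le j); rewrite /msub /madd !ffunE; lia.
- rewrite /mconv (@fsum_single _ _ _ _ sa).
  + rewrite Hsa mul1r; suff -> : msub (madd sa sb) sa = sb by [].
    by apply/ffunP => j; rewrite !ffunE addKn.
  + move=> r1 /= le ne; apply/eqP; apply: contraT; rewrite mulf_eq0 negb_or.
    move=> /andP[/Ha h1 /Hb h2]; exfalso; apply: ne; apply/ffunP => j.
    move: (h1 j) (h2 j) (le j); rewrite /msub /madd !ffunE; move=> x1 x2 x3; apply/eqP; rewrite eqn_leq x1 /=; lia.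
  + by move=> /= H; exfalso; apply: H => j; rewrite ffunE leq_addr.
- rewrite /mconv (@fsum_single _ _ _ _ (mz n)).
  + rewrite Hva; suff -> : msub (mz n) (mz n) = mz n by rewrite Hvb.
    by apply/ffunP => j; rewrite !ffunE.
  + move=> r1 /= le ne; exfalso; apply: ne; apply/ffunP => j.
    move: (le j); rewrite /Defs.mzero !ffunE => x1; apply/eqP; by rewrite -leqn0.
  + by move=> /= H; exfalso; apply: H => j; rewrite ffunE.
Qed.

Lemma pone_MF (R : realType) n o nu :
  MF (R:=R) (n:=n) o nu (@pone R n) (fun rho => (rho == mz n)%:R) (mz n) 1.
Proof.
split => //.
- move=> rho; rewrite /pone; case: eqP => [->|_].
    by rewrite subrr.
  by rewrite mono0.
- move=> rho; case: (eqVneq rho (mz n)) => [-> _ j //|_]; by rewrite mulr0n eqxx.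
- by rewrite eqxx.
- by rewrite eqxx.
Qed.

Lemma iter_sop (R : realType) (o : opkind R) (c : R[i]) (nu : R) (k : nat) :
  iter k (sop o) (mono c nu) = mono (c * Te o k (brk o nu)) (nu - eps o * k%:R).
Proof.
case: o => [||lam]; elim: k => [|k IH].
- by rewrite /= big_ord0 mulr1 mulr0 subr0.
- rewrite iterS IH; apply: funext => a; rewrite /sop /= !mono_app.
  have -> : (a + 1 == nu - 1 * k%:R) = (a == nu - 1 * k.+1%:R).
    by apply/eqP/eqP => [h|h]; [rewrite -[k.+1]addn1 natrD; lra | rewrite h -[k.+1]addn1 natrD; ring].
  case: eqP => [h|_]; last by rewrite mulr0.
  rewrite big_ord_recr /= h -[k.+1]addn1 natrD.
  have -> : nu - 1 * (k%:R + 1) + 1 = nu - k%:R by ring.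
  by rewrite rmorphB rmorph_nat; ring.
- by rewrite /= expr0 mulr1 mulr0 subr0.
- rewrite iterS IH; apply: funext => a; rewrite /sop /= !mono_app !mul0r !subr0.
  case: eqP => [->|_]; last by rewrite mulr0.
  by rewrite exprS; ring.
- by rewrite /= expr0 mulr1 mulr0 subr0.
- rewrite iterS IH; apply: funext => a; rewrite /sop /= !mono_app !mul0r !subr0.
  case: eqP => [->|_]; last by rewrite mulr0.
  by rewrite exprS; ring.
Qed.

Definition dco {R : realType} (o : opkind R) (c : R[i]) (nu : R) (k : nat) : R[i] :=
  c * Te o k (brk o nu).

Lemma pshift_MF (R : realType) n (o : opkind R) c nu (k : 'I_n.+1) :
  MF o nu (pshift o (mono c nu) k)
    (fun rho => if rho == mz n then dco o c nu k else (rho == munit k)%:R)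
    (munit k) (dco o c nu k).
Proof.
split.
- move=> rho; rewrite /pshift; case: (eqVneq rho (mz n)) => [->|nz].
    by rewrite iter_sop Ew_unit Ew0 subr0.
  case: (eqVneq rho (munit k)) => [->|nu1].
    by rewrite subrr.
  by rewrite mono0.
- move=> rho; case: (eqVneq rho (mz n)) => [-> _ j|_]; first by rewrite ffunE.
  case: (eqVneq rho (munit k)) => [-> _ j //|_].
  by rewrite mulr0n eqxx.
- by rewrite (negbTE (@munit_neq0 n k)) eqxx.
- by rewrite eqxx.
Qed.

Definition mscale {n} (e : nat) (s : mexp n) : mexp n := [ffun j => (e * s j)%N].

Lemma ppow_MF (R : realType) n (o : opkind R) nu (A : dpoly R n) a s v e :
  MF o nu A a s v -> exists a', MF o nu (ppow A e) a' (mscale e s) (v ^+ e).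
Proof.
move=> HA; elim: e => [|e [a' IH]].
- exists (fun rho => (rho == mz n)%:R).
  have -> : mscale 0 s = mz n by apply/ffunP => j; rewrite !ffunE.
  by rewrite expr0; apply: pone_MF.
- exists (mconv a a').
  have -> : mscale e.+1 s = madd s (mscale e s).
    by apply/ffunP => j; rewrite !ffunE mulSn.
  by rewrite exprS; apply: pmul_MF.
Qed.

Lemma bigprod_MF (R : realType) n (o : opkind R) c nu (sg : mexp n) (r : seq 'I_n.+1) :
  exists a, MF o nu (\big[@pmul R n/@pone R n]_(k <- r) ppow (pshift o (mono c nu) k) (sg k)) a
     [ffun j => (count_mem j r * sg j)%N] (\prod_(k <- r) dco o c nu k ^+ sg k).
Proof.
elim: r => [|x r [a IH]].
- exists (fun rho => (rho == mz n)%:R).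
  rewrite big_nil big_nil.
  have -> : [ffun j => (count_mem j [::] * sg j)%N] = mz n :> mexp n.
    by apply/ffunP => j; rewrite !ffunE.
  by apply: pone_MF.
- have [b Hb] := @ppow_MF R n o nu _ _ _ _ (sg x) (@pshift_MF R n o c nu x).
  exists (mconv b a); rewrite !big_cons.
  have -> : [ffun j => (count_mem j (x :: r) * sg j)%N] =
      madd (mscale (sg x) (munit x)) [ffun j => (count_mem j r * sg j)%N] :> mexp n.
    apply/ffunP => j; rewrite !ffunE /=.
    by case: (eqVneq x j) => [->|ne]; rewrite /= ?muln1 ?mulnDl ?mul1n ?muln0 ?add0n.
  by apply: pmul_MF.
Qed.

Definition Yp {R : realType} {n} (o : opkind R) (c : R[i]) (nu : R) (sg : mexp n) : dpoly R n :=
  \big[@pmul R n/@pone R n]_(k < n.+1) ppow (pshift o (mono c nu) k) (sg k).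

Lemma Yp_MF (R : realType) n (o : opkind R) c nu :
  exists A : mexp n -> mexp n -> R[i], forall sg,
    MF o nu (Yp o c nu sg) (A sg) sg (\prod_(k < n.+1) dco o c nu k ^+ sg k).
Proof.
have H : forall sg : mexp n, exists a,
    MF o nu (Yp o c nu sg) a sg (\prod_(k < n.+1) dco o c nu k ^+ sg k).
  move=> sg; have [a Ha] := @bigprod_MF R n o c nu sg (index_enum (ordinal n.+1)).
  exists a.
  have E : [ffun j => (count_mem j (index_enum 'I_n.+1) * sg j)%N] = sg.
    apply/ffunP => j; rewrite ffunE count_uniq_mem ?index_enum_uniq //.
    by rewrite mem_index_enum mul1n.
  by rewrite E in Ha; exact: Ha.
have [f Hf] := boolp.choice H.
by exists f.
Qed.

Set Implicit Arguments. Unset Strict Implicit.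

Definition YA {R : realType} {n} (o : opkind R) c nu (A : mexp n -> mexp n -> R[i]) :=
  forall sg, MF o nu (Yp o c nu sg) (A sg) sg (\prod_(k < n.+1) dco o c nu k ^+ sg k).

Lemma subst_val (R : realType) n (o : opkind R) (P : dpoly R n) c nu A :
  YA o c nu A -> forall rho g0,
  subst o P (mono c nu) rho g0 =
  \sum_(sg \in dsupp P) P sg (g0 - (Ew o nu sg - Ew o nu rho)) * A sg rho.
Proof.
move=> HA rho g0; rewrite /subst; apply: eq_fsbigr => sg _.
have [H1 _ _ _] := HA sg.
change (smul (P sg) (Yp o c nu sg rho) g0 = P sg (g0 - (Ew o nu sg - Ew o nu rho)) * A sg rho).
by rewrite H1 smul_mono_r.
Qed.

Lemma pcoef_subst (R : realType) n (o : opkind R) (P : dpoly R n) c nu A :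
  YA o c nu A -> forall alpha rho,
  pcoef o (subst o P (mono c nu)) alpha rho =
  \sum_(sg \in dsupp P)
     pcoef o P (alpha + nu * (msize rho)%:R - nu * (msize sg)%:R) sg * A sg rho.
Proof.
move=> HA alpha rho; rewrite /pcoef (@subst_val R n o P c nu A HA); apply: eq_fsbigr => sg _.
congr (P sg _ * _); rewrite /Ew; ring.
Qed.

Lemma newton_lb (R : realType) n (o : opkind R) (P : dpoly R n) nu L :
  (forall alpha rho, pcoef o P alpha rho != 0 -> L <= nu * (msize rho)%:R + alpha) ->
  forall p, newton o P p -> L <= nu * p.2 + p.1.
Proof.
move=> H p Np; apply: (Np [set q | L <= nu * q.2 + q.1]).
- move=> p1 q1 t /andP[t0 t1] /= A1 A2.
  have h1 : 0 <= t * (nu * p1.2 + p1.1 - L) by apply: mulr_ge0; lra.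
  have h2 : 0 <= (1 - t) * (nu * q1.2 + q1.1 - L) by apply: mulr_ge0; lra.
  have E : nu * (t * p1.2 + (1 - t) * q1.2) + (t * p1.1 + (1 - t) * q1.1) - L =
     t * (nu * p1.2 + p1.1 - L) + (1 - t) * (nu * q1.2 + q1.1 - L) by ring.
  by rewrite -subr_ge0 E addr_ge0.
- move=> q [v [[rho [Hc Hh]] [Hv1 Hv2]]] /=.
  have := H _ _ Hc; rewrite Hv2 Hh; lra.
Qed.

Lemma cloud_newton (R : realType) n (o : opkind R) (P : dpoly R n) alpha rho :
  pcoef o P alpha rho != 0 -> newton o P (alpha, (msize rho)%:R).
Proof.
move=> H A _ sub; apply: sub; exists (alpha, (msize rho)%:R); split => //.
by exists rho.
Qed.

Definition minlev {R : realType} {n} (o : opkind R) (P : dpoly R n) nu L0 :=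
  (forall alpha rho, pcoef o P alpha rho != 0 -> L0 <= nu * (msize rho)%:R + alpha) /\
  (exists alpha rho, pcoef o P alpha rho != 0 /\ nu * (msize rho)%:R + alpha = L0).

Lemma Eface_level (R : realType) n (o : opkind R) (P : dpoly R n) nu L0 p :
  minlev o P nu L0 -> Eface o P nu p -> nu * p.2 + p.1 = L0.
Proof.
move=> [lb [a1 [r1 [H1 E1]]]] [Np Hm].
have := Hm _ (cloud_newton H1); have := newton_lb lb Np; rewrite /= E1; lra.
Qed.

Lemma Eface_cloud (R : realType) n (o : opkind R) (P : dpoly R n) nu L0 alpha rho :
  minlev o P nu L0 -> pcoef o P alpha rho != 0 ->
  (Eface o P nu (alpha, (msize rho)%:R) <-> nu * (msize rho)%:R + alpha = L0).
Proof.
move=> ml H; split; first by move/(Eface_level ml).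
move=> E; split; first exact: cloud_newton.
move=> q Nq /=; rewrite E; exact: newton_lb (proj1 ml) q Nq.
Qed.

Lemma Eface_low (R : realType) n (o : opkind R) (P : dpoly R n) nu L0 (hmin : nat) :
  minlev o P nu L0 ->
  (forall alpha rho, pcoef o P alpha rho != 0 -> nu * (msize rho)%:R + alpha = L0 ->
      (hmin <= msize rho)%N) ->
  forall p, Eface o P nu p -> hmin%:R <= p.2.
Proof.
move=> ml Hh p Ep; have El := Eface_level ml Ep; case: Ep => Np _.
have lb := proj1 ml.
suff : [set q : R * R | L0 <= nu * q.2 + q.1 /\ (nu * q.2 + q.1 = L0 -> hmin%:R <= q.2)] p.
  by move=> [_]; apply.
apply: (Np [set q : R * R | L0 <= nu * q.2 + q.1 /\ (nu * q.2 + q.1 = L0 -> hmin%:R <= q.2)]).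
- move=> p1 q1 t /andP[t0 t1] [A1 B1] [A2 B2].
  move: A1 B1 A2 B2; set lp := nu * p1.2 + p1.1; set lq := nu * q1.2 + q1.1.
  move=> A1 B1 A2 B2.
  have h1 : 0 <= t * (lp - L0) by apply: mulr_ge0; lra.
  have h2 : 0 <= (1 - t) * (lq - L0) by apply: mulr_ge0; lra.
  have E : nu * (t * p1.2 + (1 - t) * q1.2) + (t * p1.1 + (1 - t) * q1.1) - L0 =
     t * (lp - L0) + (1 - t) * (lq - L0) by rewrite /lp /lq; ring.
  split; first by rewrite -subr_ge0 E addr_ge0.
  move=> /= Er.
  have Z : t * (lp - L0) + (1 - t) * (lq - L0) = 0 by rewrite -E Er subrr.
  have Z1 : t * (lp - L0) = 0 by lra.
  have Z2 : (1 - t) * (lq - L0) = 0 by lra.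
  have g1 : 0 <= t * (p1.2 - hmin%:R).
    move: Z1 => /eqP; rewrite mulf_eq0 => /orP[/eqP ->|]; first by rewrite mul0r.
    by rewrite subr_eq0 => /eqP /B1 hb; apply: mulr_ge0; lra.
  have g2 : 0 <= (1 - t) * (q1.2 - hmin%:R).
    move: Z2 => /eqP; rewrite mulf_eq0 => /orP[/eqP ->|]; first by rewrite mul0r.
    by rewrite subr_eq0 => /eqP /B2 hb; apply: mulr_ge0; lra.
  rewrite /=.
  have E2 : t * p1.2 + (1 - t) * q1.2 - hmin%:R =
    t * (p1.2 - hmin%:R) + (1 - t) * (q1.2 - hmin%:R) by ring.
  by rewrite -subr_ge0 E2 addr_ge0.
- move=> q [v [[rho [Hc Hh']] [Hv1 Hv2]]] /=.
  have L1 := lb _ _ Hc.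
  split; first by rewrite Hv2 Hh'; lra.
  move=> Eq; rewrite Hv2 Hh' ler_nat; apply: (Hh v.1 rho Hc).
  move: Eq L1; rewrite Hv2 Hh'; lra.
Qed.

Lemma LP (R : realType) n (o : opkind R) (P : dpoly R n) nu L0 :
  minlev o P nu L0 ->
  (lowest_point_ge1 o P nu <-> pcoef o P L0 (mz n) = 0).
Proof.
move=> ml; split.
- move=> [p [Ep [Hmin H1]]]; apply/eqP; apply: contraT => H.
  have E0 : Eface o P nu (L0, (msize (mz n))%:R).
    by apply/(Eface_cloud ml H); rewrite msize0 mulr0 add0r.
  have := Hmin _ E0; rewrite /= msize0; lra.
- move=> H0.
  have ex : exists h, (fun h => `[< exists alpha rho, pcoef o P alpha rho != 0 /\
        nu * (msize rho)%:R + alpha = L0 /\ msize rho = h >]) h.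
    case: (ml) => _ [a1 [r1 [H1 E1]]]; exists (msize r1); apply/asboolP.
    by exists a1, r1.
  case: (ex_minnP ex) => hmin /asboolP [a1 [r1 [H1 [E1 Eh]]]] Hmin.
  exists (a1, (msize r1)%:R); split; first by apply/(Eface_cloud ml H1).
  split.
    move=> q Eq; rewrite /= Eh; apply: (Eface_low ml) Eq => alpha rho Hc El.
    by apply: Hmin; apply/asboolP; exists alpha, rho.
  rewrite /= ler1n lt0n; apply/negP => /eqP /msize_eq0 r0.
  move: H1; rewrite r0 => H1.
  move: E1; rewrite r0 msize0 mulr0 add0r => E1.
  by move: H1; rewrite E1 H0 eqxx.
Qed.

Lemma charpoly_eval (R : realType) n (o : opkind R) (P : dpoly R n) c nu (A : mexp n -> mexp n -> R[i]) L0 :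
  YA o c nu A -> finite_set (dsupp P) -> minlev o P nu L0 ->
  (charpoly o P nu).[c] = pcoef o (subst o P (mono c nu)) L0 (mz n).
Proof.
move=> HA fin ml.
rewrite (pcoef_subst P HA).
set S' := [set ar : R * mexp n | pcoef o P ar.1 ar.2 != 0 /\ nu * (msize ar.2)%:R + ar.1 = L0].
rewrite /charpoly.
have -> : [set ar : R * mexp n | pcoef o P ar.1 ar.2 != 0 /\
      Eface o P nu (ar.1, (msize ar.2)%:R)] = S'.
  apply/seteqP; split => ar /= [h1 h2]; split => //.
    exact/(Eface_cloud ml h1).
  exact/(Eface_cloud ml h1).
have finS : finite_set S'.
  apply: (@sub_finite_set _ _ [set (L0 - nu * (msize sg)%:R, sg) | sg in dsupp P]); last exact: finite_image.
  move=> [a r] [/= h1 h2]; exists r.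
    by exists (a + eps o * (mweight r)%:R).
  congr pair; lra.
rewrite fsbig_finite // horner_sum -fsbig_finite //.
rewrite (reindex_fsbig (fun sg : mexp n => (L0 - nu * (msize sg)%:R, sg))
   [set sg | pcoef o P (L0 - nu * (msize sg)%:R) sg != 0] S'); last first.
  split.
  - by move=> sg /= h; rewrite /S' /=; split => //; lra.
  - by move=> x y _ _ [].
  - move=> [a r] [/= h1 h2]; exists r => /=.
      have -> : L0 - nu * (msize r)%:R = a by lra.
      exact: h1.
    congr pair; lra.
rewrite (fsbig_widen [set sg | pcoef o P (L0 - nu * (msize sg)%:R) sg != 0] (dsupp P)); last 2 first.
- by move=> sg /= h; exists (L0 - nu * (msize sg)%:R + eps o * (mweight sg)%:R).
- move=> sg /= [_ h]; move/negP: h; rewrite negbK => /eqP ->.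
  by rewrite mul0r scale0r horner0.
apply: eq_fsbigr => sg _ /=.
have [_ _ _ Hv] := HA sg.
rewrite Hv hornerZ hornerXn msize0 mulr0 addr0 /dco.
rewrite -mulrA; congr (_ * _).
rewrite [RHS](eq_bigr (fun k : 'I_n.+1 => c ^+ sg k * Te o k (brk o nu) ^+ sg k)); last first.
  by move=> k _; rewrite exprMn.
by rewrite big_split /= prodrXr mulrC.
Qed.

From mathcomp Require Import finmap.

Lemma seq_min (R : realType) (T : eqType) (f : T -> R) (s : seq T) :
  s != [::] -> exists x, x \in s /\ forall y, y \in s -> f x <= f y.
Proof.
elim: s => // a s IH _.
case: (eqVneq s [::]) => [->|ne].
  by exists a; split; rewrite ?mem_seq1 // => y; rewrite mem_seq1 => /eqP ->.
have [m [ms Hm]] := IH ne.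
case: (leP (f a) (f m)) => h.
- exists a; split; first by rewrite inE eqxx.
  move=> y; rewrite inE => /orP[/eqP ->//|/Hm]; exact: le_trans.
- exists m; split; first by rewrite inE ms orbT.
  move=> y; rewrite inE => /orP[/eqP ->|/Hm //]; exact: ltW.
Qed.

Lemma finite_min (R : realType) (T : choiceType) (A : set T) (f : T -> R) x0 :
  finite_set A -> A x0 -> exists x, A x /\ forall y, A y -> f x <= f y.
Proof.
move=> fA Ax0.
have ne : finmap.enum_fset (fset_set A) != [::].
  apply/eqP => e; have : x0 \in fset_set A by rewrite in_fset_set //; apply: mem_set.
  by rewrite -[x0 \in fset_set A]/(x0 \in enum_fset (fset_set A)) e.
have [x [xs Hx]] := seq_min f ne.
exists x; split.
  by move: xs; rewrite in_fset_set // => /set_mem.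
by move=> y Ay; apply: Hx; rewrite in_fset_set //; apply: mem_set.
Qed.

Lemma ML (R : realType) n (o : opkind R) (P : dpoly R n) nu :
  is_dpoly P -> dpoly_nonzero P -> exists L0, minlev o P nu L0.
Proof.
move=> [fin gps] [r0 [a0 H0]].
set B0 := nu * (msize r0)%:R + (a0 - eps o * (mweight r0)%:R).
set Z := [set ar : R * mexp n | pcoef o P ar.1 ar.2 != 0 /\
                                nu * (msize ar.2)%:R + ar.1 <= B0].
have Zfin : finite_set Z.
  apply: (@sub_finite_set _ _ (\bigcup_(r in dsupp P)
     [set (b - eps o * (mweight r)%:R, r) | b in
        [set b | P r b != 0 /\ b <= B0 - nu * (msize r)%:R + eps o * (mweight r)%:R]])).
    move=> [a r] [/= h1 h2]; exists r.
      by exists (a + eps o * (mweight r)%:R).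
    exists (a + eps o * (mweight r)%:R).
      by split => //; lra.
    by congr pair; lra.
  apply: bigcup_finite => // r _; apply: finite_image; exact: gps.
have Z0 : Z (a0 - eps o * (mweight r0)%:R, r0).
  split => /=; last by rewrite /B0.
  by rewrite /pcoef subrK.
have [[a1 r1] [[/= h1 h2] Hm]] :=
  finite_min (fun ar : R * mexp n => nu * (msize ar.2)%:R + ar.1) Zfin Z0.
exists (nu * (msize r1)%:R + a1); split; last by exists a1, r1.
move=> alpha rho H.
case: (lerP (nu * (msize rho)%:R + alpha) B0) => hb.
  by apply: (Hm (alpha, rho)); split.
by apply: le_trans (ltW hb).
Qed.

Lemma mle_bound n (s : mexp n) j : (s j <= msize s)%N.
Proof. by rewrite /msize (bigD1 j) //= leq_addr. Qed.

Lemma mle_finite n (s : mexp n) : finite_set [set r : mexp n | mle r s].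
Proof.
pose g := fun f : {ffun 'I_n.+1 -> 'I_(msize s).+1} => [ffun j => val (f j)] : mexp n.
apply: (@sub_finite_set _ _ (g @` setT)); last first.
  by apply: finite_image; apply: finite_finset.
move=> r /= le; exists [ffun j => inord (r j)] => //.
apply/ffunP => j; rewrite /g !ffunE /= inordK //.
by rewrite ltnS; apply: leq_trans (le j) (mle_bound s j).
Qed.

Lemma subst_dpoly (R : realType) n (o : opkind R) (P : dpoly R n) c nu
  (A : mexp n -> mexp n -> R[i]) :
  YA o c nu A -> is_dpoly P -> is_dpoly (subst o P (mono c nu)).
Proof.
move=> HA [fin gps]; split.
- apply: (@sub_finite_set _ _ (\bigcup_(sg in dsupp P) [set r : mexp n | mle r sg])).
    move=> rho [g0]; rewrite (subst_val P HA) => /fsum_neq0 [sg Hs].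
    rewrite mulf_eq0 negb_or => /andP[_ HAs].
    have [_ Hsupp _ _] := HA sg.
    by exists sg => //; apply: Hsupp.
  by apply: bigcup_finite => // sg _; apply: mle_finite.
- move=> rho M.
  apply: (@sub_finite_set _ _ (\bigcup_(sg in dsupp P)
     [set b + (Ew o nu sg - Ew o nu rho) | b in
       [set b | P sg b != 0 /\ b <= M - (Ew o nu sg - Ew o nu rho)]])).
    move=> a [/= Ha aM]; move: Ha; rewrite (subst_val P HA) => /fsum_neq0 [sg Hs].
    rewrite mulf_eq0 negb_or => /andP[HP _].
    exists sg => //; exists (a - (Ew o nu sg - Ew o nu rho)); last by rewrite subrK.
    by split => //; lra.
  apply: bigcup_finite => // sg _; apply: finite_image; exact: gps.
Qed.

Lemma subst_minlev (R : realType) n (o : opkind R) (P : dpoly R n) c nu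
  (A : mexp n -> mexp n -> R[i]) L0 :
  YA o c nu A -> finite_set (dsupp P) -> minlev o P nu L0 ->
  minlev o (subst o P (mono c nu)) nu L0.
Proof.
move=> HA fin [lb [a1 [r1 [H1 E1]]]]; split.
- move=> alpha rho; rewrite (pcoef_subst P HA) => /fsum_neq0 [sg _].
  rewrite mulf_eq0 negb_or => /andP[/lb h _]; lra.
- set T := [set sg : mexp n | pcoef o P (L0 - nu * (msize sg)%:R) sg != 0].
  have Tfin : finite_set T.
    apply: sub_finite_set fin => sg /= h.
    by exists (L0 - nu * (msize sg)%:R + eps o * (mweight sg)%:R).
  have Tr1 : T r1 by rewrite /T /=; have -> : L0 - nu * (msize r1)%:R = a1 by lra.
  have [ss [Ts Hs]] := finite_min (fun sg : mexp n => - (msize sg)%:R : R) Tfin Tr1.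
  exists (L0 - nu * (msize ss)%:R), ss; split; last by ring.
  rewrite (pcoef_subst P HA) (@fsum_single _ _ _ _ ss).
  + have [_ _ -> _] := HA ss; rewrite mulr1.
    by have -> : L0 - nu * (msize ss)%:R + nu * (msize ss)%:R - nu * (msize ss)%:R =
        L0 - nu * (msize ss)%:R by ring.
  + move=> sg Dsg ne; apply/eqP; apply: contraT; rewrite mulf_eq0 negb_or.
    move=> /andP[hP hA]; exfalso.
    have [_ Hsupp _ _] := HA sg.
    have nss : ss != sg by apply/eqP => e; apply: ne; rewrite e.
    have lt := @mle_lt n _ _ (Hsupp _ hA) nss.
    have Tsg : T sg.
      rewrite /T /=; move: hP.
      by have -> : L0 - nu * (msize ss)%:R + nu * (msize ss)%:R - nu * (msize sg)%:R =
        L0 - nu * (msize sg)%:R by ring.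
    have := Hs _ Tsg; rewrite lerN2 ler_nat leqNgt lt //.
  + move=> nD; exfalso; apply: nD.
    by exists (L0 - nu * (msize ss)%:R + eps o * (mweight ss)%:R).
Qed.

Definition H0 {R : realType} {n} (o : opkind R) (P : dpoly R n) nu a0 :=
  pcoef o P a0 (mz n) != 0 /\
  forall alpha rho, pcoef o P alpha rho != 0 -> a0 <= nu * (msize rho)%:R + alpha.

Lemma H0prop (R : realType) n (o : opkind R) (P : dpoly R n) c nu nu'
  (A : mexp n -> mexp n -> R[i]) a0 :
  YA o c nu' A -> nu < nu' -> H0 o P nu a0 -> H0 o (subst o P (mono c nu')) nu' a0.
Proof.
move=> HA lt [Hz lb]; split.
- rewrite (pcoef_subst P HA) (@fsum_single _ _ _ _ (mz n)).
  + have [_ _ -> _] := HA (mz n); rewrite mulr1 msize0 mulr0 addr0 subr0.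
    exact: Hz.
  + move=> sg _ ne; apply/eqP; apply: contraT; rewrite mulf_eq0 negb_or.
    move=> /andP[hP _]; exfalso.
    have := lb _ _ hP; rewrite msize0 mulr0 addr0 => h.
    have : (0 < msize sg)%N.
      by rewrite lt0n; apply/negP => /eqP /msize_eq0.
    rewrite -(ltr0n R) => hs.
    have : 0 < (nu' - nu) * (msize sg)%:R by apply: mulr_gt0; lra.
    lra.
  + move=> nD; exfalso; apply: nD.
    by exists (a0 + eps o * (mweight (mz n))%:R).
- move=> alpha rho; rewrite (pcoef_subst P HA) => /fsum_neq0 [sg _].
  rewrite mulf_eq0 negb_or => /andP[/lb h _].
  have : 0 <= (nu' - nu) * (msize sg)%:R by apply: mulr_ge0; [lra | exact: ler0n].
  lra.
Qed.

Lemma H0_minlev (R : realType) n (o : opkind R) (P : dpoly R n) nu a0 :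
  H0 o P nu a0 -> minlev o P nu a0.
Proof.
move=> [Hz lb]; split => //; exists a0, (mz n); split => //.
by rewrite msize0 mulr0 add0r.
Qed.

Local Close Scope classical_set_scope.

Theorem lemma4 (R : realType) (o : opkind R) (n : nat) (P : dpoly R n)
  (k : nat) (c : nat -> R[i]) (nu : nat -> R) :
  op_ok o ->
  is_dpoly P -> dpoly_nonzero P ->
  (forall i, (i <= k)%N -> c i != 0) ->
  (forall i j, (i < j)%N -> (j <= k)%N -> nu i < nu j) ->
  admissible o P k c nu <-> lowest_point_ge1 o (Pseq o P c nu k.+1) (nu k).
Proof.
move=> _ Pd Pnz _ mono_nu.
have YAi : forall i, exists A : mexp n -> mexp n -> R[i], YA o (c i) (nu i) A.
  by move=> i; apply: Yp_MF.
have Inv : forall i, is_dpoly (Pseq o P c nu i) /\ dpoly_nonzero (Pseq o P c nu i).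
  elim => [|i [Id Inz]]; first by split.
  have [A HA] := YAi i.
  have [L0 ml] := ML o (nu i) Id Inz.
  have Qd := subst_dpoly HA Id.
  have [_ [a1 [r1 [H1 _]]]] := subst_minlev HA (proj1 Id) ml.
  split => //; exists r1, (a1 + eps o * (mweight r1)%:R); exact: H1.
split.
- move=> adm.
  have [Id Inz] := Inv k.
  have [A HA] := YAi k.
  have [L0 ml] := ML o (nu k) Id Inz.
  have mlQ := subst_minlev HA (proj1 Id) ml.
  apply/(LP mlQ).
  rewrite -(charpoly_eval HA (proj1 Id) ml).
  exact/eqP/(adm k).
- move=> low i ik; apply: contraT => nr.
  have [Id Inz] := Inv i.
  have [A HA] := YAi i.
  have [L0 ml] := ML o (nu i) Id Inz.
  have mlQ := subst_minlev HA (proj1 Id) ml.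
  have Hz : pcoef o (Pseq o P c nu i.+1) L0 (mz n) != 0.
    by rewrite /= -(charpoly_eval HA (proj1 Id) ml).
  have H0i : H0 o (Pseq o P c nu i.+1) (nu i) L0 by split; [exact: Hz | exact: mlQ.1].
  have prop : forall m, (i + m <= k)%N -> H0 o (Pseq o P c nu (i + m)%N.+1) (nu (i + m)%N) L0.
    elim => [|m IH] hm.
      by rewrite !addn0.
    have IH' : H0 o (Pseq o P c nu (i + m)%N.+1) (nu (i + m)%N) L0.
      by apply: IH; rewrite addnS in hm; exact: ltnW.
    have [B HB] := YAi (i + m.+1)%N.
    rewrite addnS in hm HB *.
    apply: (H0prop HB _ IH').
    by apply: mono_nu.
  have := prop (k - i)%N; rewrite subnKC // => /(_ (leqnn k)) Hk.
  have := (LP (H0_minlev Hk)).1 low.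
  by case: Hk => /eqP Hk' _ /Hk'.
Qed.
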